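(* Let $G$ and $H$ be connected graphs, each with at least $2$ vertices. Then $$\gamma(G\times H)=\frac{1}{\frac{1}{\gamma(G)}+\frac{1}{\gamma(H)}}.$$
   Context: For a finite simple undirected graph $G$ with $n$ vertices, let $\mathcal{F}=\{x\in\mathbb{R}^{V(G)} : \sum_{v} x_v = 0,\ \|x\|_\infty = 1\}$, for $x\in\mathcal{F}$ let $\gamma_x(G)=\max_{uv\in E(G)}|x_u-x_v|$, and $\gamma(G)=\min_{x\in\mathcal{F}}\gamma_x(G)$. The Cartesian product $G\times H$ has vertex set $V(G)\times V(H)$, with $(u_1,v_1)\sim(u_2,v_2)$ iff either $u_1\sim u_2$ in $G$ and $v_1=v_2$, or $u_1=u_2$ and $v_1\sim v_2$ in $H$. *)

(* Defs.v *)
From HB Require Import structures.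
From mathcomp Require Import all_boot all_order all_algebra.
From mathcomp Require Import boolp classical_sets reals.
Set Implicit Arguments. Unset Strict Implicit. Unset Printing Implicit Defensive.
Import Order.TTheory GRing.Theory Num.Theory.
Local Open Scope ring_scope.
Local Open Scope classical_set_scope.

Definition simple_graph (T : finType) (e : rel T) : Prop :=
  symmetric e /\ irreflexive e.

Definition connected_graph (T : finType) (e : rel T) : Prop :=
  forall u v : T, connect e u v.

Definition cart_prod (T U : finType) (e : rel T) (f : rel U) : rel (T * U) :=
  fun p q => (e p.1 q.1 && (p.2 == q.2)) || ((p.1 == q.1) && f p.2 q.2).

Section Gamma.
Variable R : realType.

Definition supnorm (T : finType) (x : T -> R) : R :=
  \big[Num.max/0]_(v : T) `|x v|.

Definition feasible (T : finType) : set (T -> R) :=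
  [set x | \sum_(v : T) x v = 0 /\ supnorm x = 1].

Definition gamma_x (T : finType) (e : rel T) (x : T -> R) : R :=
  \big[Num.max/0]_(p : T * T | e p.1 p.2) `|x p.1 - x p.2|.

(* gamma(G) = min over F of gamma_x(G) (the minimum is attained, so it
   coincides with the infimum used here) *)
Definition gamma (T : finType) (e : rel T) : R :=
  inf [set gamma_x e x | x in @feasible T].
End Gamma.

(* Main.v *)
Require Import Defs.
From HB Require Import structures.
From mathcomp Require Import all_boot all_order all_algebra.
From mathcomp Require Import boolp classical_sets reals.
From mathcomp Require Import zify ring lra.
Set Implicit Arguments. Unset Strict Implicit.
Import Order.TTheory GRing.Theory Num.Theory.
Local Open Scope ring_scope.

Definition isdist (T : finType) (e : rel T) (d : T -> T -> nat) :=
  [/\ forall u, d u u = 0%N,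
      forall u w v, e u w -> (d w v <= (d u v).+1)%N &
      forall u v, u != v -> exists2 w, e u w & (d w v < d u v)%N].

Lemma dist_tri (T : finType) (e : rel T) d : symmetric e -> isdist e d ->
  forall u w v, (d u v <= d u w + d w v)%N.
Proof.
move=> sym [d0 d1 d2] u w v.
move: {2}(d u w).+1 (ltnSn (d u w)) => k.
elim: k u => [|k IH] u //. move=> Hk.
case: (eqVneq u w) => [->|neq]; first by rewrite d0.
case: (d2 _ _ neq) => u' e1 lt1.
have h := d1 u' u v; rewrite sym e1 in h; have {}h := h isT.
have := IH u' (leq_trans lt1 Hk). lia.
Qed.

Lemma dist_sym (T : finType) (e : rel T) d : symmetric e -> isdist e d ->
  forall u v, d v u = d u v.
Proof.
move=> sym dd.
have H : forall u v, (d v u <= d u v)%N.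
  have [d0 d1 d2] := dd; move=> u v.
  move: {2}(d u v).+1 (ltnSn (d u v)) => k.
  elim: k u => [|k IH] u //. move=> Hk.
  case: (eqVneq u v) => [->|neq]; first by rewrite d0.
  case: (d2 _ _ neq) => w e1 lt1.
  have h1 := dist_tri sym dd v w u.
  have h2 := d1 u w u e1. rewrite d0 in h2.
  have := IH w (leq_trans lt1 Hk). lia.
by move=> u v; apply/eqP; rewrite eqn_leq !H.
Qed.

Definition ball (T : finType) (e : rel T) (v : T) (k : nat) : {set T} :=
  iter k (fun S => S :|: [set u | [exists w in S, e u w]]) [set v].

Lemma ball_ex (T : finType) (e : rel T) : connected_graph e ->
  forall u v, exists k, u \in ball e v k.
Proof.
move=> conn u v; have /connectP [p pth ->] := conn u v.
elim: p u pth => [|w p IH] u /=.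
  by move=> _; exists 0%N; rewrite /ball /= set11.
case/andP=> euw pth; case: (IH w pth) => k Hk; exists k.+1.
rewrite /ball iterS finset.in_setU; apply/orP; right; rewrite inE.
by apply/existsP; exists w; rewrite Hk euw.
Qed.

Lemma ball_mono (T : finType) (e : rel T) v k k' u :
  (k <= k')%N -> u \in ball e v k -> u \in ball e v k'.
Proof.
move/subnK=> <-; elim: (k' - k)%N => // i IH /IH H.
by rewrite addSn /ball iterS finset.in_setU -/(ball e v _) H.
Qed.

Lemma dist_exists (T : finType) (e : rel T) : symmetric e -> connected_graph e ->
  exists d, isdist e d.
Proof.
move=> sym conn.
pose d u v := ex_minn (ball_ex conn u v).
have dP : forall u v, u \in ball e v (d u v).
  by move=> u v; rewrite /d; case: ex_minnP.
have dM : forall u v k, u \in ball e v k -> (d u v <= k)%N.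
  by move=> u v k; rewrite /d; case: ex_minnP => m _ H /H.
exists d; split.
- by move=> u; apply/eqP; rewrite -leqn0; apply: dM; rewrite /ball /= set11.
- move=> u w v euw; apply: dM; rewrite /ball iterS finset.in_setU; apply/orP; right.
  by rewrite inE; apply/existsP; exists u; rewrite dP sym euw.
- move=> u v neq; have := dP u v.
  case E: (d u v) => [|k].
    by rewrite /ball /= finset.in_set1 (negbTE neq).
  rewrite /ball iterS finset.in_setU -/(ball e v k) => /orP [H|].
    by have := dM _ _ _ H; rewrite E ltnn.
  rewrite inE => /existsP [w /andP [Hw euw]]; exists w => //.
  by have := dM _ _ _ Hw; rewrite ltnS.
Qed.

Lemma le_bigmaxr (R : realType) (I : eqType) (r : seq I) (P : pred I) (F : I -> R) i :
  i \in r -> P i -> F i <= \big[Num.max/0]_(j <- r | P j) F j.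
Proof.
elim: r => // a r IH; rewrite inE big_cons => /orP [/eqP->|ir] Pi.
  by rewrite Pi le_max lexx.
case: (P a); last exact: IH.
by rewrite le_max (IH ir Pi) orbT.
Qed.

Lemma bigmax_ub (R : realType) (I : eqType) (r : seq I) (P : pred I) (F : I -> R) B :
  0 <= B -> (forall i, P i -> F i <= B) -> \big[Num.max/0]_(j <- r | P j) F j <= B.
Proof.
move=> B0 H; apply: (big_ind (fun y => y <= B)) => //.
by move=> x y hx hy; rewrite ge_max hx hy.
Qed.

Lemma bigmax_ex (R : realType) (I : eqType) (r : seq I) (P : pred I) (F : I -> R) :
  \big[Num.max/0]_(j <- r | P j) F j = 0 \/ exists i, \big[Num.max/0]_(j <- r | P j) F j = F i.
Proof.
apply: (big_ind (fun y => y = 0 \/ exists i, y = F i)); first by left.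
  move=> x y hx hy; case: (leP x y) => _; [exact: hy| exact: hx].
by move=> i _; right; exists i.
Qed.

Lemma dist_sum_pos (T : finType) (e : rel T) d v0 :
  isdist e d -> (1 < #|T|)%N -> (0 < \sum_u d u v0)%N.
Proof.
move=> [d0 d1 d2] T2.
have dpos : forall u v, u != v -> (0 < d u v)%N.
  by move=> u v /d2 [w _ h]; apply: leq_ltn_trans h.
have [u neq] : exists u, u != v0.
  case/card_gt1P: T2 => x [y [_ _ xy]].
  case: (eqVneq x v0) => [exv|]; last by exists x.
  by exists y; rewrite -exv eq_sym.
rewrite (bigD1 u) //=; have := dpos _ _ neq; lia.
Qed.

Lemma gamma_dist (R : realType) (T : finType) (e : rel T) d v0 :
  symmetric e -> isdist e d -> (1 < #|T|)%N ->
  (forall v, (\sum_u d u v <= \sum_u d u v0)%N) ->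
  gamma R e = #|T|%:R / (\sum_u d u v0)%:R.
Proof.
move=> sym dd T2 vmax.
have [d0 d1 d2] := dd.
set D := (\sum_u d u v0)%N.
have dpos : forall u v, u != v -> (0 < d u v)%N.
  by move=> u v /d2 [w _ h]; apply: leq_ltn_trans h.
have Dpos : (0 < D)%N.
  have [u neq] : exists u, u != v0.
    case/card_gt1P: T2 => x [y [_ _ xy]].
    case: (eqVneq x v0) => [exv|]; last by exists x.
    by exists y; rewrite -exv eq_sym.
  rewrite /D (bigD1 u) //=; have := dpos _ _ neq; lia.
have DR : (0 : R) < D%:R by rewrite ltr0n.
set c : R := #|T|%:R / D%:R.
have c0 : 0 <= c by rewrite divr_ge0 // ler0n.
have lb : forall x, @feasible R T x -> c <= gamma_x e x.
  move=> x [sum0 sn1]; set g := gamma_x e x.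
  have edge : forall u w, e u w -> `|x u - x w| <= g.
    move=> u w euw.
    exact: (le_bigmaxr (P := fun p => e p.1 p.2) (fun p => `|x p.1 - x p.2|)
              (mem_index_enum (u, w)) euw).
  have g0 : 0 <= g by apply: (big_ind (fun y => 0 <= y)) => // a b ha hb; rewrite le_max ha.
  have pth : forall u v, `|x u - x v| <= g * (d u v)%:R.
    move=> u v; move: {2}(d u v).+1 (ltnSn (d u v)) => k.
    elim: k u => [|k IH] u //. move=> Hk.
    case: (eqVneq u v) => [->|neq]; first by rewrite subrr normr0 mulr_ge0.
    case: (d2 _ _ neq) => w euw lt1.
    have h1 := ler_distD (x w) (x u) (x v).
    have h2 := edge _ _ euw.
    have h3 := IH w (leq_trans lt1 Hk).
    have h4 : (d w v)%:R + 1 <= (d u v)%:R :> R.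
      by rewrite natr1 ler_nat.
    nra.
  have [v xv1] : exists v, `|x v| = 1.
    move: sn1; rewrite /supnorm.
    case: (bigmax_ex (index_enum T) xpredT (fun v => `|x v|)).
      by move=> ->; move/eqP; rewrite eq_sym oner_eq0.
    by move=> [i ->] h; exists i.
  have Hn : #|T|%:R = \sum_u x v * (x v - x u).
    rewrite -big_distrr /= sumrB sum0 subr0 sumr_const.
    rewrite mulrnAr -expr2 -real_normK ?num_real // xv1 expr1n.
    by [].
  have Hs : \sum_u x v * (x v - x u) <= \sum_u g * (d u v)%:R.
    apply: ler_sum => u _; apply: le_trans (pth u v).
    apply: le_trans (ler_norm _) _.
    by rewrite normrM xv1 mul1r distrC.
  have HD : \sum_u g * (d u v)%:R <= g * D%:R.
    rewrite -big_distrr /= -natr_sum; apply: ler_wpM2l => //.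
    by rewrite ler_nat vmax.
  rewrite /c ler_pdivrMr //; apply: le_trans HD; rewrite Hn; exact: Hs.
pose x0 : T -> R := fun u => 1 - c * (d u v0)%:R.
have tri2 : forall u, (#|T| * d u v0 <= 2 * D)%N.
  move=> u.
  have h1 : (#|T| * d u v0 = \sum_(w : T) d u v0)%N by rewrite sum_nat_const.
  have h2 : (\sum_(w : T) d u v0 <= \sum_w (d w u + d w v0))%N.
    apply: leq_sum => w _; rewrite (dist_sym sym dd u w); exact: dist_tri sym dd u w v0.
  rewrite big_split /= in h2; have := vmax u; lia.
have x0b : forall u, `|x0 u| <= 1.
  move=> u; rewrite /x0 ler_norml; apply/andP; split; last first.
    by rewrite lerBlDr lerDl mulr_ge0.
  have : c * (d u v0)%:R <= 2.
    rewrite /c mulrAC ler_pdivrMr // -natrM -(natrM _ 2) ler_nat; exact: tri2.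
  lra.
have fx0 : @feasible R T x0.
  split.
    rewrite /x0 sumrB sumr_const -big_distrr /= -natr_sum -/D /c divfK.
      by rewrite subrr.
    by rewrite pnatr_eq0 -lt0n.
  apply/le_anti/andP; split.
    apply: bigmax_ub => // i _; exact: x0b.
  have := le_bigmaxr (P := xpredT) (fun v => `|x0 v|) (mem_index_enum v0) isT.
  by rewrite /x0 d0 mulr0 subr0 normr1.
have gx0 : gamma_x e x0 <= c.
  apply: bigmax_ub => // p epp.
  have h1 := d1 _ _ v0 epp.
  have h2 := d1 p.2 p.1 v0; rewrite sym epp in h2; have {}h2 := h2 isT.
  have h1' : (d p.2 v0)%:R <= (d p.1 v0)%:R + 1 :> R by rewrite natr1 ler_nat.
  have h2' : (d p.1 v0)%:R <= (d p.2 v0)%:R + 1 :> R by rewrite natr1 ler_nat.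
  rewrite /x0 ler_norml; apply/andP; split; nra.
rewrite /gamma -/c; apply/le_anti/andP; split.
  apply: le_trans gx0.
  apply: ge_inf; first by exists c => y [x fx <-]; exact: lb.
  by exists x0.
apply: lb_le_inf; first by exists (gamma_x e x0); exists x0.
by move=> y [x fx <-]; exact: lb.
Qed.

Lemma exists_max (T : finType) (F : T -> nat) : (0 < #|T|)%N ->
  exists v0, forall v, (F v <= F v0)%N.
Proof.
case/card_gt0P => x _.
case: (arg_maxnP F (P := xpredT) (isT : xpredT x)) => v _ H.
by exists v => y; apply: H.
Qed.

Lemma cart_sym (T U : finType) (e : rel T) (f : rel U) :
  symmetric e -> symmetric f -> symmetric (cart_prod e f).
Proof.
by move=> se sf p q; rewrite /cart_prod se sf (eq_sym p.2) (eq_sym p.1).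
Qed.

Lemma cart_dist (T U : finType) (e : rel T) (f : rel U) dG dH :
  isdist e dG -> isdist f dH ->
  isdist (cart_prod e f) (fun p q => dG p.1 q.1 + dH p.2 q.2)%N.
Proof.
move=> [a0 a1 a2] [b0 b1 b2]; split.
- by move=> u; rewrite a0 b0.
- move=> [u1 u2] [w1 w2] [v1 v2]; rewrite /cart_prod /=.
  case/orP=> /andP [h h'].
    move/eqP: h' => h'; subst w2; have := a1 _ _ v1 h; lia.
  move/eqP: h => h; subst w1; have := b1 _ _ v2 h'; lia.
- move=> [u1 u2] [v1 v2] /= neq.
  case: (eqVneq u1 v1) => [E|n1].
    subst v1; have n2 : u2 != v2 by apply: contra neq => /eqP ->.
    case: (b2 _ _ n2) => w ew lw; exists (u1, w).
      by rewrite /cart_prod /= eqxx ew orbT.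
    by rewrite /= ltn_add2l.
  case: (a2 _ _ n1) => w ew lw; exists (w, u2).
    by rewrite /cart_prod /= eqxx ew.
  by rewrite /= ltn_add2r.
Qed.

Lemma sum_pair (T U : finType) (F : T -> nat) (G : U -> nat) :
  (\sum_(p : T * U) (F p.1 + G p.2) = #|U| * \sum_u F u + #|T| * \sum_w G w)%N.
Proof.
rewrite -(pair_bigA _ (fun i j => F i + G j))%N /=.
under eq_bigr => i _ do rewrite big_split /= sum_nat_const.
rewrite big_split /= -big_distrr /= sum_nat_const.
by [].
Qed.

Theorem theorem5p1 (R : realType) (T U : finType) (e : rel T) (f : rel U) :
  simple_graph e -> simple_graph f ->
  connected_graph e -> connected_graph f ->
  (1 < #|T|)%N -> (1 < #|U|)%N ->
  gamma R (cart_prod e f) = 1 / (1 / gamma R e + 1 / gamma R f).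
Proof.
move=> [se _] [sf _] ce cf nT nU.
have [dG dGd] := dist_exists se ce.
have [dH dHd] := dist_exists sf cf.
have [v0 Hv0] := exists_max (fun v => \sum_u dG u v)%N (ltnW nT).
have [w0 Hw0] := exists_max (fun v => \sum_u dH u v)%N (ltnW nU).
have gG := @gamma_dist R _ _ _ _ se dGd nT Hv0.
have gH := @gamma_dist R _ _ _ _ sf dHd nU Hw0.
have dP := cart_dist dGd dHd.
have nP : (1 < #|{: T * U}|)%N by rewrite card_prod; nia.
have HP : forall q : T * U,
    (\sum_p (dG p.1 q.1 + dH p.2 q.2) <= \sum_p (dG p.1 (v0, w0).1 + dH p.2 (v0, w0).2))%N.
  move=> q; rewrite !(sum_pair (fun u => dG u _) (fun u => dH u _)) /=.
  have := Hv0 q.1; have := Hw0 q.2; nia.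
have gP := @gamma_dist R _ _ _ _ (cart_sym se sf) dP nP HP.
rewrite gP gG gH (sum_pair (fun u => dG u _) (fun u => dH u _)) card_prod /=.
set A := (\sum_u dG u v0)%N.
set B := (\sum_u dH u w0)%N.
have Apos : (0 < A)%N by apply: dist_sum_pos dGd nT.
have Bpos : (0 < B)%N by apply: dist_sum_pos dHd nU.
rewrite natrM natrD !natrM.
have a0 : (0 : R) < #|T|%:R by rewrite ltr0n; lia.
have b0 : (0 : R) < #|U|%:R by rewrite ltr0n; lia.
have A0 : (0 : R) < A%:R by rewrite ltr0n.
have B0 : (0 : R) < B%:R by rewrite ltr0n.
field.
by rewrite !gt_eqF // ?addr_gt0 ?mulr_gt0.
Qed.
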